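(* Let $\mathcal H$ be the $5$-uniform hypergraph defined below, let $e,f$ be two edges of $\mathcal H$, and let $\phi : V(\mathcal{H}_{ef}) \to V(\mathcal{H})$ be a monomorphism. If one of $e,f$ lies in $\{b, e_5\}$ and the other lies in $\{r, g, a\}$, then $\phi$ is the identity.
   Context: $\mathcal{H}$ has vertex set $\{z, v_1,\dots,v_9\}$ and edges $r=\{z,v_1,v_3,v_5,v_8\}$, $g=\{z,v_2,v_4,v_7,v_9\}$, $a=\{v_1,v_4,v_6,v_8,v_9\}$, $b=\{v_9,v_1,v_2,v_3,v_4\}$, and $e_i=\{v_i,v_{i+1},v_{i+2},v_{i+3},v_{i+4}\}$ for $i=1,\dots,5$. $\mathcal{H}_{ef}$ is the hypergraph with edge set $E(\mathcal H)\setminus\{e,f\}$, and $V(\mathcal H_{ef})$ is the union of its edges. A monomorphism $\phi: V(\mathcal{H}_{ef})\to V(\mathcal{H})$ is an injective map such that $\{\phi(y): y\in x\}$ is an edge of $\mathcal H$ for every edge $x$ of $\mathcal H_{ef}$; ''identity'' means $\phi(y)=y$ for all $y\in V(\mathcal H_{ef})$. *)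

(* Defs.v *)
From HB Require Import structures.
From mathcomp Require Import all_boot.
Set Implicit Arguments. Unset Strict Implicit. Unset Printing Implicit Defensive.

(* Vertices of H: z is encoded as 0, v_i as i (1 <= i <= 9). *)
Definition vtx := 'I_10.
Definition vz : vtx := inord 0.
Definition vv (i : nat) : vtx := inord i.

Inductive hedge := Er | Eg | Ea | Eb | E1 | E2 | E3 | E4 | E5.

Definition hedge_code (x : hedge) : 'I_9 :=
  match x with
  | Er => inord 0 | Eg => inord 1 | Ea => inord 2 | Eb => inord 3
  | E1 => inord 4 | E2 => inord 5 | E3 => inord 6 | E4 => inord 7
  | E5 => inord 8 end.
Definition hedge_decode (i : 'I_9) : hedge :=
  match val i with
  | 0 => Er | 1 => Eg | 2 => Ea | 3 => Eb | 4 => E1 | 5 => E2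
  | 6 => E3 | 7 => E4 | _ => E5 end.
Lemma hedge_codeK : cancel hedge_code hedge_decode.
Proof. by case; rewrite /hedge_decode /= inordK. Qed.
HB.instance Definition _ := Finite.copy hedge (can_type hedge_codeK).

Definition ei (i : nat) : {set vtx} :=
  [set vv i; vv i.+1; vv i.+2; vv i.+3; vv i.+4].

Definition edge_set (x : hedge) : {set vtx} :=
  match x with
  | Er => [set vz; vv 1; vv 3; vv 5; vv 8]
  | Eg => [set vz; vv 2; vv 4; vv 7; vv 9]
  | Ea => [set vv 1; vv 4; vv 6; vv 8; vv 9]
  | Eb => [set vv 9; vv 1; vv 2; vv 3; vv 4]
  | E1 => ei 1 | E2 => ei 2 | E3 => ei 3 | E4 => ei 4 | E5 => ei 5
  end.

Definition in_Hef (e f x : hedge) : bool := (x != e) && (x != f).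

Definition V_Hef (e f : hedge) : {set vtx} :=
  \bigcup_(x | in_Hef e f x) edge_set x.

(* phi : V(H_ef) -> V(H) is a monomorphism (values of phi outside V(H_ef) are irrelevant). *)
Definition monomorphism (e f : hedge) (phi : vtx -> vtx) : Prop :=
  {in V_Hef e f &, injective phi} /\
  (forall x, in_Hef e f x -> exists y, phi @: edge_set x = edge_set y).

(* Main.v *)
Require Import Defs.
From mathcomp Require Import all_boot.

Definition edge_nat (x : hedge) : seq nat :=
  match x with
  | Er => [:: 0; 1; 3; 5; 8]
  | Eg => [:: 0; 2; 4; 7; 9]
  | Ea => [:: 1; 4; 6; 8; 9]
  | Eb => [:: 9; 1; 2; 3; 4]
  | E1 => [:: 1; 2; 3; 4; 5]
  | E2 => [:: 2; 3; 4; 5; 6]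
  | E3 => [:: 3; 4; 5; 6; 7]
  | E4 => [:: 4; 5; 6; 7; 8]
  | E5 => [:: 5; 6; 7; 8; 9]
  end.

Definition hn (x : hedge) : nat :=
  match x with
  | Er => 0 | Eg => 1 | Ea => 2 | Eb => 3 | E1 => 4 | E2 => 5
  | E3 => 6 | E4 => 7 | E5 => 8 end.

Lemma hn_inj : injective hn.
Proof. intros x y; destruct x, y; simpl; intro H; (reflexivity || discriminate). Qed.

Definition all_hedges := [:: Er; Eg; Ea; Eb; E1; E2; E3; E4; E5].
Lemma mem_all_hedges x : x \in all_hedges.
Proof. by case: x; rewrite !inE eqxx ?orbT. Qed.

Lemma eq_vv (v : vtx) i : i < 10 -> (v == vv i) = (val v == i).
Proof. by move=> hi; rewrite -val_eqE /vv /= inordK. Qed.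

Lemma eq_vz (v : vtx) : (v == vz) = (val v == 0).
Proof. by rewrite -val_eqE /vz /= inordK. Qed.

Lemma mem_edge (v : vtx) x : (v \in edge_set x) = (val v \in edge_nat x).
Proof.
by case: x; rewrite /edge_set /ei !inE ?eq_vz !eq_vv // !orbA.
Qed.

Definition feasible (asg : seq (hedge * hedge)) : bool :=
  all (fun v => has (fun w =>
        all (fun p => (v \in edge_nat p.1) == (w \in edge_nat p.2)) asg)
      (iota 0 10)) (iota 0 10).

Fixpoint srch (asg : seq (hedge * hedge)) (rest : seq hedge) : bool :=
  if ~~ feasible asg then true else
  match rest with
  | [::] => all (fun p => hn p.1 == hn p.2) asg
  | x :: rest' => all (fun y => srch (rcons asg (x, y)) rest') all_hedges
  end.

Lemma feasible_cat l1 l2 : feasible (l1 ++ l2) -> feasible l1.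
Proof.
move=> /allP H; apply/allP => v /H /hasP [w Hw Hall]; apply/hasP; exists w => //.
by move: Hall; rewrite all_cat => /andP [].
Qed.

Lemma srch_ok (sigma : hedge -> hedge) rest asg :
  srch asg rest -> feasible (asg ++ [seq (x, sigma x) | x <- rest]) ->
  all (fun p => hn p.1 == hn p.2) (asg ++ [seq (x, sigma x) | x <- rest]).
Proof.
elim: rest asg => [|x rest IH] asg /=.
  by rewrite !cats0; case: (feasible asg).
move=> Hs Hf.
have Fa : feasible asg by apply: feasible_cat Hf.
have {}Hs : all (fun y => srch (rcons asg (x, y)) rest) all_hedges by move: Hs; rewrite /= Fa.
move/allP: Hs => /(_ (sigma x) (mem_all_hedges _)) Hs.
by rewrite -cat_rcons; apply: IH => //; rewrite cat_rcons.
Qed.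

Definition Hef_list e f :=
  [seq x <- all_hedges | (hn x != hn e) && (hn x != hn f)].

Lemma mem_Hef_list e f x : (x \in Hef_list e f) = in_Hef e f x.
Proof.
rewrite mem_filter mem_all_hedges andbT /in_Hef.
by rewrite !(inj_eq hn_inj).
Qed.

Definition check (e f : hedge) : bool :=
  all (fun v => has (fun x => v \in edge_nat x) (Hef_list e f)) (iota 0 10) &&
  srch [::] (Hef_list e f) &&
  all (fun v => all (fun w =>
     all (fun x => (v \in edge_nat x) == (w \in edge_nat x)) (Hef_list e f) ==> (w == v))
     (iota 0 10)) (iota 0 10).

Lemma check_ok e f phi : check e f -> monomorphism e f phi ->
  {in V_Hef e f, forall y, phi y = y}.
Proof.
case/andP => /andP [/allP HV Hs] /allP Hu [Hinj Hedge] y _.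
have Hi (a : 'I_10) : val a \in iota 0 10 by rewrite mem_iota /= ltn_ord.
have HVT (a : vtx) : a \in V_Hef e f.
  have /hasP [x hx ha] := HV (val a) (Hi _).
  by apply/bigcupP; exists x; rewrite -?mem_Hef_list ?mem_edge.
have inj : injective phi by move=> a b; apply: Hinj.
pose sigma x := odflt x [pick z | phi @: edge_set x == edge_set z].
have Hsig x : in_Hef e f x -> phi @: edge_set x = edge_set (sigma x).
  move=> /Hedge [z Hz]; rewrite /sigma; case: pickP => [z' /eqP //|/(_ z)].
  by rewrite Hz eqxx.
have Hpat v x : in_Hef e f x ->
    (val v \in edge_nat x) = (val (phi v) \in edge_nat (sigma x)).
  by move=> hx; rewrite -!mem_edge -Hsig // (mem_imset _ _ inj).
have Hf : feasible ([::] ++ [seq (x, sigma x) | x <- Hef_list e f]).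
  apply/allP => v hv; rewrite mem_iota in hv; apply/hasP.
  exists (val (phi (inord v : vtx))); first by rewrite mem_iota /= ltn_ord.
  apply/allP => p /mapP [x]; rewrite mem_Hef_list => hx -> /=.
  by rewrite -Hpat // (_ : val (inord v : vtx) = v) ?eqxx //; apply: inordK.
have Hid := @srch_ok sigma _ _ Hs Hf.
apply/val_inj/eqP.
have := Hu (val y) (Hi _).
move=> /allP /(_ (val (phi y)) (Hi _)) /implyP; apply.
apply/allP => x hx; have hx' := hx; rewrite mem_Hef_list in hx'.
rewrite Hpat //.
move/allP: Hid => /(_ (x, sigma x)); rewrite /= => H.
by rewrite -(hn_inj _ _ (eqP (H (map_f (fun x => (x, sigma x)) hx)))).
Qed.

Theorem lemma4p11 (e f : hedge) (phi : vtx -> vtx) :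
  ((e \in [:: Eb; E5]) && (f \in [:: Er; Eg; Ea]) ||
   (f \in [:: Eb; E5]) && (e \in [:: Er; Eg; Ea])) ->
  monomorphism e f phi ->
  {in V_Hef e f, forall y, phi y = y}.
Proof.
move=> H; apply: check_ok.
move: H; rewrite !inE -!(inj_eq hn_inj).
case: e; case: f => H; simpl in H; try discriminate; vm_compute; reflexivity.
Qed.
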